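(* Consider a closed tandem queueing system of $n\ge1$ single-server nodes $1,\dots,n$ with initial buffer contents $r_1,\dots,r_n\in\{0,1,2,\dots\}$, not all equal to $0$, and service times $\tau_{ik}>0$. Let the departure epochs $d_i(k)\in\underline{\mathbb R}$, $k\ge1$, satisfy for all $i$ and $k\ge1$ $$d_i(k)=\tau_{ik}\otimes a_i(k)\oplus\tau_{ik}\otimes d_i(k-1),\qquad a_1(k)=d_n(k-r_1),\quad a_i(k)=d_{i-1}(k-r_i)\ (i=2,\dots,n),$$ with $d_i(0)=0$ and $d_i(k)=\varepsilon$ for $k<0$. Let $M=\max_i r_i\ (\ge1)$, and for $m\ge0$ let $G_m=(g^m_{ij})$ be the $n\times n$ matrix with $g^m_{ij}=0$ if ($j=i+1\le n$ and $r_j=m$) or ($i=n$, $j=1$ and $r_1=m$), and $g^m_{ij}=\varepsilon$ otherwise (for $n=1$ this means $g^m_{11}=0$ iff $r_1=m$). Then the graph associated with $G_0$ is acyclic, and, with $p$ the length of its longest path and $\mathcal T_k=\mathrm{diag}(\tau_{1k},\dots,\tau_{nk})$, for all $k\ge1$ $$\mathbf d(k)=\bigoplus_{m=1}^{M}T_m(k)\otimes\mathbf d(k-m),$$ where $T_1(k)=(E\oplus\mathcal T_k\otimes G_0^T)^p\otimes\mathcal T_k\otimes(E\oplus G_1^T)$ and $T_m(k)=(E\oplus\mathcal T_k\otimes G_0^T)^p\otimes\mathcal T_k\otimes G_m^T$ for $m=2,\dots,M$.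
   Context: Max-plus algebra: on $\underline{\mathbb R}=\mathbb R\cup\{\varepsilon\}$ with $\varepsilon=-\infty$, define $x\oplus y=\max(x,y)$ and $x\otimes y=x+y$ (with $x\otimes\varepsilon=\varepsilon\otimes x=\varepsilon$). For matrices, $(X\oplus Y)_{ij}=x_{ij}\oplus y_{ij}$, $(X\otimes Y)_{ij}=\bigoplus_k x_{ik}\otimes y_{kj}$; matrix–vector products likewise; $\bigoplus$ denotes iterated $\oplus$ (maximum). $E$ is the $n\times n$ identity (diagonal $0$, off-diagonal $\varepsilon$); $X^0=E$, $X^q=X\otimes X^{q-1}$; $X^T$ is the transpose. The graph associated with an $n\times n$ matrix $X$ has vertices $\{1,\dots,n\}$ and an arc $(i,j)$ iff $x_{ij}\ne\varepsilon$ (loops count as cycles); path length = number of arcs. $\mathbf d(k)=(d_1(k),\dots,d_n(k))^T$. *)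

(* Defs.v *)
From HB Require Import structures.
From mathcomp Require Import all_boot all_order all_algebra.
Set Implicit Arguments. Unset Strict Implicit. Unset Printing Implicit Defensive.
Import Order.TTheory GRing.Theory Num.Theory.
Local Open Scope ring_scope.

Section MaxPlus.
Variable R : realFieldType.

Definition mp := option R.
Definition eps : mp := None.

Definition mp_plus (x y : mp) : mp :=
  match x, y with
  | None, _ => y
  | _, None => x
  | Some a, Some b => Some (Num.max a b)
  end.

Definition mp_times (x y : mp) : mp :=
  match x, y with
  | Some a, Some b => Some (a + b)
  | _, _ => None
  end.

Variable n : nat.
Definition mpmx := 'I_n -> 'I_n -> mp.
Definition mpvec := 'I_n -> mp.

Definition mx_plus (A B : mpmx) : mpmx := fun i j => mp_plus (A i j) (B i j).
Definition mx_mul (A B : mpmx) : mpmx :=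
  fun i j => \big[mp_plus/eps]_(k < n) mp_times (A i k) (B k j).
Definition mx_mulv (A : mpmx) (v : mpvec) : mpvec :=
  fun i => \big[mp_plus/eps]_(k < n) mp_times (A i k) (v k).
Definition mx_E : mpmx := fun i j => if i == j then Some 0 else eps.
Definition mx_pow (A : mpmx) (q : nat) : mpmx := iter q (mx_mul A) mx_E.
Definition mx_tr (A : mpmx) : mpmx := fun i j => A j i.
Definition mx_diag (t : 'I_n -> R) : mpmx :=
  fun i j => if i == j then Some (t i) else eps.

Definition mx_arc (A : mpmx) : rel 'I_n := fun i j => A i j != eps.
(* a path with vertex list i :: s has length size s (number of arcs) *)
Definition mx_acyclic (A : mpmx) : Prop :=
  forall (i : 'I_n) (s : seq 'I_n), path (mx_arc A) i s -> last i s = i -> s = [::].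
Definition mx_longest_path_length (A : mpmx) (p : nat) : Prop :=
  (exists (i : 'I_n) (s : seq 'I_n), path (mx_arc A) i s /\ size s = p) /\
  (forall (i : 'I_n) (s : seq 'I_n), path (mx_arc A) i s -> (size s <= p)%N).

End MaxPlus.

(* Tandem system with n.+1 nodes; paper's node i is index i-1 here. *)
Section Tandem.
Variable R : realFieldType.
Variable n : nat.

Definition prev_node (i : 'I_n.+1) : 'I_n.+1 :=
  if val i is j.+1 then inord j else ord_max.

Definition Gmx (r : 'I_n.+1 -> nat) (m : nat) : mpmx R n.+1 :=
  fun i j =>
    if ((val j == (val i).+1) && (r j == m)%N)
       || [&& i == ord_max, j == ord0 & (r ord0 == m)%N]
    then Some 0 else eps R.

Definition Tdiag (tau : 'I_n.+1 -> nat -> R) (k : nat) : mpmx R n.+1 :=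
  mx_diag (fun i => tau i k).

Definition Tmx (r : 'I_n.+1 -> nat) (tau : 'I_n.+1 -> nat -> R) (p k m : nat)
  : mpmx R n.+1 :=
  mx_mul (mx_pow (mx_plus (@mx_E R n.+1) (mx_mul (Tdiag tau k) (mx_tr (Gmx r 0))))
                 p)
         (mx_mul (Tdiag tau k)
            (if m == 1%N then mx_plus (@mx_E R n.+1) (mx_tr (Gmx r 1))
             else mx_tr (Gmx r m))).

End Tandem.

(* Main.v *)
Require Import Defs.
From HB Require Import structures.
From mathcomp Require Import all_boot all_order all_algebra.
From Stdlib Require Import FunctionalExtensionality.
Import Order.TTheory GRing.Theory Num.Theory.
Local Open Scope ring_scope.
Set Implicit Arguments. Unset Strict Implicit.

Lemma mpA (R : realFieldType) : associative (@mp_plus R).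
Proof. by move=> [a|] [b|] [c|] //=; rewrite maxA. Qed.
Lemma mpC (R : realFieldType) : commutative (@mp_plus R).
Proof. by move=> [a|] [b|] //=; rewrite maxC. Qed.
Lemma mp0l (R : realFieldType) : left_id (eps R) (@mp_plus R).
Proof. by case. Qed.
HB.instance Definition _ (R : realFieldType) :=
  Monoid.isComLaw.Build (mp R) (eps R) (@mp_plus R) (@mpA R) (@mpC R) (@mp0l R).

Lemma mp0r (R : realFieldType) (x : mp R) : mp_plus x (eps R) = x.
Proof. by case: x. Qed.
Lemma mpxx (R : realFieldType) (x : mp R) : mp_plus x x = x.
Proof. by case: x => //= a; rewrite maxxx. Qed.
Lemma mtA (R : realFieldType) : associative (@mp_times R).
Proof. by move=> [a|] [b|] [c|] //=; rewrite addrA. Qed.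
Lemma mtC (R : realFieldType) : commutative (@mp_times R).
Proof. by move=> [a|] [b|] //=; rewrite addrC. Qed.
Lemma mt0l (R : realFieldType) (x : mp R) : mp_times (eps R) x = eps R.
Proof. by []. Qed.
Lemma mt0r (R : realFieldType) (x : mp R) : mp_times x (eps R) = eps R.
Proof. by case: x. Qed.
Lemma mt1l (R : realFieldType) (x : mp R) : mp_times (Some 0) x = x.
Proof. by case: x => //= a; rewrite add0r. Qed.
Lemma mt1r (R : realFieldType) (x : mp R) : mp_times x (Some 0) = x.
Proof. by case: x => //= a; rewrite addr0. Qed.
Lemma mtDr (R : realFieldType) (a b c : mp R) :
  mp_times a (mp_plus b c) = mp_plus (mp_times a b) (mp_times a c).
Proof.
case: a b c => [a|] [b|] [c|] //=; congr Some.
by rewrite real_addr_maxr ?num_real.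
Qed.
Lemma mtDl (R : realFieldType) (a b c : mp R) :
  mp_times (mp_plus b c) a = mp_plus (mp_times b a) (mp_times c a).
Proof. by rewrite mtC mtDr !(mtC a). Qed.

Lemma bigmtl (R : realFieldType) (a : mp R) (I : Type) (r : seq I) (P : pred I) F :
  mp_times a (\big[@mp_plus R/eps R]_(i <- r | P i) F i)
  = \big[@mp_plus R/eps R]_(i <- r | P i) mp_times a (F i).
Proof. apply: (big_morph (mp_times a)) => //; [exact: mtDr | exact: mt0r]. Qed.
Lemma bigmtr (R : realFieldType) (a : mp R) (I : Type) (r : seq I) (P : pred I) F :
  mp_times (\big[@mp_plus R/eps R]_(i <- r | P i) F i) a
  = \big[@mp_plus R/eps R]_(i <- r | P i) mp_times (F i) a.
Proof. exact: (big_morph (fun x => mp_times x a) (@mtDl R a) (mt0l a)). Qed.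

Lemma mulvA (R : realFieldType) n (A B : mpmx R n) v i :
  mx_mulv (mx_mul A B) v i = mx_mulv A (mx_mulv B v) i.
Proof.
rewrite /mx_mulv /mx_mul.
under eq_bigr => k _ do rewrite bigmtr.
rewrite exchange_big /=; apply: eq_bigr => k _.
rewrite bigmtl; apply: eq_bigr => l _; by rewrite mtA.
Qed.

Lemma mulvD (R : realFieldType) n (A : mpmx R n) v w i :
  mx_mulv A (fun j => mp_plus (v j) (w j)) i = mp_plus (mx_mulv A v i) (mx_mulv A w i).
Proof. rewrite /mx_mulv -big_split /=; apply: eq_bigr => k _; exact: mtDr. Qed.

Lemma mulv_big (R : realFieldType) n (A : mpmx R n) (I : Type) (s : seq I) (P : pred I) F i :
  mx_mulv A (fun j => \big[@mp_plus R/eps R]_(m <- s | P m) F m j) i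
  = \big[@mp_plus R/eps R]_(m <- s | P m) mx_mulv A (F m) i.
Proof.
rewrite /mx_mulv.
transitivity (\big[@mp_plus R/eps R]_(k < n) \big[@mp_plus R/eps R]_(m <- s | P m)
   mp_times (A i k) (F m k)).
  by apply: eq_bigr => k _; exact: bigmtl.
by rewrite exchange_big.
Qed.

Lemma mulv_plusmx (R : realFieldType) n (A B : mpmx R n) v i :
  mx_mulv (mx_plus A B) v i = mp_plus (mx_mulv A v i) (mx_mulv B v i).
Proof. rewrite /mx_mulv -big_split /=; apply: eq_bigr => k _; exact: mtDl. Qed.

Lemma mulvE (R : realFieldType) n (v : mpvec R n) i : mx_mulv (@mx_E R n) v i = v i.
Proof.
rewrite /mx_mulv (bigD1 i) //= big1 ?mp0r /mx_E ?eqxx ?mt1l // => j /negPf.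
by rewrite eq_sym => ->.
Qed.

Lemma mulv_ext (R : realFieldType) n (A : mpmx R n) v w i :
  (forall j, v j = w j) -> mx_mulv A v i = mx_mulv A w i.
Proof. by move=> h; apply: eq_bigr => k _; rewrite h. Qed.

Definition mple (R : realFieldType) (x y : mp R) := mp_plus x y = y.

Lemma mulv_mono (R : realFieldType) n (A : mpmx R n) v w :
  (forall j, mple (v j) (w j)) -> forall i, mple (mx_mulv A v i) (mx_mulv A w i).
Proof. by move=> h i; rewrite /mple -mulvD; apply: mulv_ext. Qed.

Lemma Gmx_prev (R : realFieldType) n (r : 'I_n.+1 -> nat) m (j i : 'I_n.+1) :
  Gmx R r m j i = if (j == prev_node i) && (r i == m)%N then Some 0 else eps R.
Proof.
rewrite /Gmx /prev_node; case: i => [[|i'] hi] /=.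
  have -> : Ordinal hi = ord0 by apply: val_inj.
  by [].
have hi' : (i' < n.+1)%N by apply: ltnW.
rewrite andbF orbF eqSS.
have -> : (j == inord i') = (i' == val j) by rewrite -val_eqE /= inordK // eq_sym.
by [].
Qed.

Lemma big_neq_eps (R : realFieldType) n (F : 'I_n -> mp R) :
  \big[@mp_plus R/eps R]_(k < n) F k != eps R -> exists k, F k != eps R.
Proof.
move=> h; apply/existsP; apply: contraNT h => /existsPn h.
by apply/eqP; apply: big1 => k _; apply/eqP; have := h k; rewrite negbK.
Qed.

Lemma mt_neq_eps (R : realFieldType) (a b : mp R) :
  mp_times a b != eps R -> a != eps R /\ b != eps R.
Proof. by case: a; case: b. Qed.

Lemma pow_path (R : realFieldType) n (A : mpmx R n) q (i j : 'I_n) :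
  mx_pow A q i j != eps R ->
  exists s, [/\ path (fun x y => A y x != eps R) j s, last j s = i & size s = q].
Proof.
elim: q i => [|q IH] i /=.
  rewrite /mx_E; case: (i =P j) => [-> _|_]; [by exists [::] | by rewrite eqxx].
rewrite /mx_mul => /big_neq_eps [l /mt_neq_eps [h1 h2]].
have [s [hp hl hs]] := IH _ h2.
exists (rcons s i); split; first by rewrite rcons_path hp hl.
  by rewrite last_rcons.
by rewrite size_rcons hs.
Qed.

Lemma ac4 (R : realFieldType) (a b c d : mp R) :
  mp_plus (mp_plus a b) (mp_plus c d) = mp_plus (mp_plus a c) (mp_plus b d).
Proof. exact: Monoid.mulmACA. Qed.

Lemma star_solve (R : realFieldType) n (A : mpmx R n) (D b : mpvec R n) p :
  (forall i, D i = mp_plus (mx_mulv A D i) (b i)) ->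
  (forall i j, mx_pow A p.+1 i j = eps R) ->
  forall i, D i = mx_mulv (mx_pow (mx_plus (@mx_E R n) A) p) b i.
Proof.
move=> hD hnil.
pose y q := mx_mulv (mx_pow (mx_plus (@mx_E R n) A) q) b.
have yS q i : y q.+1 i = mp_plus (y q i) (mx_mulv A (y q) i).
  by rewrite /y /= mulvA mulv_plusmx mulvE.
have y0 i : y 0%N i = b i by rewrite /y /= mulvE.
have hb q i : mp_plus (b i) (y q i) = y q i.
  elim: q i => [|q IH] i; first by rewrite y0 mpxx.
  by rewrite yS mpA IH.
have ha q i : mp_plus (y q i) (D i) = D i.
  elim: q i => [|q IH] i.
    by rewrite y0 (hD i) mpC -mpA mpxx.
  have hm := mulv_mono A IH i.
  by rewrite yS [mp_plus (y q i) _]mpC -mpA IH {1}(hD i) mpA hm -hD.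
have hc q i : D i = mp_plus (mx_mulv (mx_pow A q.+1) D i) (y q i).
  elim: q i => [|q IH] i.
    rewrite y0 {1}(hD i); congr mp_plus; rewrite /= mulvA; apply: mulv_ext => j.
    by rewrite mulvE.
  rewrite yS.
  have -> : mx_mulv (mx_pow A q.+2) D i = mx_mulv A (mx_mulv (mx_pow A q.+1) D) i.
    by rewrite /= mulvA.
  rewrite mpA [mp_plus (mx_mulv A _ i) (y q i)]mpC -mpA -mulvD.
  rewrite (mulv_ext _ _ (fun j => esym (IH j))).
  rewrite mpC -(hb q i) mpA -hD.
  by rewrite mpC ha.
move=> i; rewrite (hc p i) /y; rewrite {1}/mx_mulv big1 ?mp0l // => j _.
by rewrite hnil.
Qed.

From mathcomp Require Import zify.

Lemma prev_val n (y : 'I_n.+1) :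
  nat_of_ord (prev_node y) = (if nat_of_ord y is y'.+1 then y' else n).
Proof.
rewrite /prev_node; case: y => [[|y'] hy] //=.
by rewrite inordK // ltnW.
Qed.

Lemma arc_G0 (R : realFieldType) n (r : 'I_n.+1 -> nat) x y :
  mx_arc (Gmx R r 0) x y = (x == prev_node y) && (r y == 0)%N.
Proof. by rewrite /mx_arc Gmx_prev; case: ifP. Qed.

Definition phi n (v x : 'I_n.+1) : nat :=
  if (v <= x)%N then (x - v)%N else (x + n.+1 - v)%N.

Lemma phi_le n (v x : 'I_n.+1) : (phi v x <= n)%N.
Proof. have := ltn_ord x; have := ltn_ord v; rewrite /phi => h1 h2; case: (leqP v x) => h3; lia. Qed.

Lemma phi_step (R : realFieldType) n (r : 'I_n.+1 -> nat) (v : 'I_n.+1) x y :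
  r v != 0%N -> mx_arc (Gmx R r 0) x y -> phi v y = (phi v x).+1.
Proof.
move=> hv; rewrite arc_G0 => /andP[/eqP hx hy].
have hyv : (y : nat) != (v : nat).
  by apply: contraNneq hv => /ord_inj <-.
have hxv : ((y : nat) = 0 /\ (x : nat) = n) \/ (y : nat) = (x : nat).+1.
  have := prev_val y; rewrite -hx; case: (nat_of_ord y) => [|y'] h; [left|right]; lia.
have := ltn_ord x; have := ltn_ord v; have := ltn_ord y.
move: hxv hyv; rewrite /phi => hxv /eqP hyv.
move=> h1 h2 h3; case: (leqP v x); case: (leqP v y); lia.
Qed.

Lemma phi_path (R : realFieldType) n (r : 'I_n.+1 -> nat) (v : 'I_n.+1) x s :
  r v != 0%N -> path (mx_arc (Gmx R r 0)) x s -> phi v (last x s) = (phi v x + size s)%N.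
Proof.
move=> hv; elim: s x => [|y s IH] x /=; first by rewrite addn0.
move=> /andP[hxy hp]; rewrite IH // (phi_step hv hxy); lia.
Qed.

Lemma G0_acyclic (R : realFieldType) n (r : 'I_n.+1 -> nat) :
  (exists v, r v != 0%N) -> mx_acyclic (Gmx R r 0).
Proof.
move=> [v hv] i s hp hl; have := phi_path hv hp; rewrite hl => h.
by apply/eqP; rewrite -size_eq0 -(eqn_add2l (phi v i)) addn0 -h.
Qed.

Lemma G0_bound (R : realFieldType) n (r : 'I_n.+1 -> nat) :
  (exists v, r v != 0%N) -> forall x s, path (mx_arc (Gmx R r 0)) x s -> (size s <= n)%N.
Proof.
move=> [v hv] x s hp; have := phi_path hv hp; have := phi_le v (last x s); lia.
Qed.

Lemma G0_longest (R : realFieldType) n (r : 'I_n.+1 -> nat) :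
  (exists v, r v != 0%N) -> exists p, mx_longest_path_length (Gmx R r 0) p.
Proof.
move=> hr.
pose P L := [exists x : 'I_n.+1, [exists t : L.-tuple 'I_n.+1,
   path (mx_arc (Gmx R r 0)) x t]].
have exP : exists L, P L.
  by exists 0%N; apply/existsP; exists ord0; apply/existsP; exists [tuple].
have ubP : forall L, P L -> (L <= n)%N.
  move=> L /existsP [x /existsP [t ht]].
  by rewrite -(size_tuple t); apply: (G0_bound hr ht).
case: (ex_maxnP exP ubP) => p hp hmax; exists p; split.
  move: hp => /existsP [x /existsP [t ht]]; exists x, t; split => //.
  exact: size_tuple.
move=> i s hs; apply: hmax; apply/existsP; exists i; apply/existsP.
by exists (in_tuple s).
Qed.

Lemma diag_mul_entry (R : realFieldType) n (t : 'I_n -> R) (X : mpmx R n) i j :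
  mx_mul (mx_diag t) X i j = mp_times (Some (t i)) (X i j).
Proof.
rewrite /mx_mul (bigD1 i) //= big1 ?mp0r /mx_diag ?eqxx // => l /negPf.
by rewrite eq_sym => ->.
Qed.

Lemma mulv_diag (R : realFieldType) n (t : 'I_n -> R) (v : mpvec R n) i :
  mx_mulv (mx_diag t) v i = mp_times (Some (t i)) (v i).
Proof.
rewrite /mx_mulv (bigD1 i) //= big1 ?mp0r /mx_diag ?eqxx // => l /negPf.
by rewrite eq_sym => ->.
Qed.

Lemma mulv_trG (R : realFieldType) n (r : 'I_n.+1 -> nat) m (v : mpvec R n.+1) i :
  mx_mulv (mx_tr (Gmx R r m)) v i = if (r i == m)%N then v (prev_node i) else eps R.
Proof.
rewrite /mx_mulv /mx_tr; case: ifP => h.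
  rewrite (bigD1 (prev_node i)) //= Gmx_prev eqxx h mt1l big1 ?mp0r // => j hj.
  by rewrite Gmx_prev (negPf hj).
by apply: big1 => j _; rewrite Gmx_prev h andbF.
Qed.

Lemma A_nil (R : realFieldType) n (r : 'I_n.+1 -> nat) (tau : 'I_n.+1 -> nat -> R) k p :
  mx_longest_path_length (Gmx R r 0) p ->
  forall i j, mx_pow (mx_mul (Tdiag tau k) (mx_tr (Gmx R r 0))) p.+1 i j = eps R.
Proof.
move=> [_ hmax] i j; apply/eqP; apply/negPn/negP => /pow_path [s [hp _ hs]].
have : path (mx_arc (Gmx R r 0)) j s.
  apply: sub_path hp => x y; rewrite /Tdiag diag_mul_entry /mx_tr.
  by move/mt_neq_eps => [].
by move/hmax; rewrite hs ltnn.
Qed.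

Unset Implicit Arguments.
Set Strict Implicit.

Theorem mainTheorem3 (R : realFieldType) (n : nat)
  (r : 'I_n.+1 -> nat) (tau : 'I_n.+1 -> nat -> R) (d : 'I_n.+1 -> int -> mp R)
  (hr : exists i, r i != 0%N)
  (htau : forall i k, (0 < k)%N -> 0 < tau i k)
  (hd0 : forall i, d i 0 = Some 0)
  (hdneg : forall i (k : int), k < 0 -> d i k = eps R)
  (hrec : forall i (k : nat), (0 < k)%N ->
     d i k%:Z =
       mp_plus (mp_times (Some (tau i k)) (d (prev_node i) (k%:Z - (r i)%:Z)))
               (mp_times (Some (tau i k)) (d i (k%:Z - 1)))) :
  mx_acyclic (Gmx R r 0) /\
  exists p : nat, mx_longest_path_length (Gmx R r 0) p /\
    forall k : nat, (0 < k)%N ->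
      forall i : 'I_n.+1,
        d i k%:Z =
          \big[@mp_plus R/eps R]_(1 <= m < (\max_(j < n.+1) r j).+1)
             mx_mulv (Tmx r tau p k m) (fun j => d j (k%:Z - m%:Z)) i.
Proof.
split; first exact: G0_acyclic hr.
have [p hp] := @G0_longest R n r hr.
exists p; split => // k hk.
set M := \max_(j < n.+1) r j.
have hM : forall j, (r j <= M)%N := fun j => leq_bigmax j.
have M1 : (1 < M.+1)%N.
  by case: hr => v; rewrite -lt0n => hv; rewrite ltnS; exact: leq_trans hv (hM v).
pose A := mx_mul (Tdiag tau k) (mx_tr (Gmx R r 0)).
pose H (m : nat) := if m == 1%N then mx_plus (@mx_E R n.+1) (mx_tr (Gmx R r 1))
                    else mx_tr (Gmx R r m).
pose b := fun i => \big[@mp_plus R/eps R]_(1 <= m < M.+1)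
   mx_mulv (mx_mul (Tdiag tau k) (H m)) (fun j => d j (k%:Z - m%:Z)) i.
have hD : forall i, d i k%:Z = mp_plus (mx_mulv A (fun j => d j k%:Z) i) (b i).
  move=> i.
  have hA : mx_mulv A (fun j => d j k%:Z) i =
     mp_times (Some (tau i k)) (if r i == 0%N then d (prev_node i) k%:Z else eps R).
    by rewrite /A mulvA /Tdiag mulv_diag mulv_trG.
  have hb : b i = mp_times (Some (tau i k))
     (mp_plus (\big[@mp_plus R/eps R]_(1 <= m < M.+1)
                  (if m == 1%N then d i (k%:Z - m%:Z) else eps R))
              (\big[@mp_plus R/eps R]_(1 <= m < M.+1)
                  (if r i == m then d (prev_node i) (k%:Z - m%:Z) else eps R))).
    rewrite mtDr !bigmtl -big_split /b; apply: eq_bigr => m _ /=.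
    rewrite mulvA /Tdiag mulv_diag /H; case: eqP => [->|_].
      by rewrite mulv_plusmx mulvE mulv_trG mtDr.
    by rewrite mulv_trG mp0l.
  have h1 : \big[@mp_plus R/eps R]_(1 <= m < M.+1)
                  (if m == 1%N then d i (k%:Z - m%:Z) else eps R) = d i (k%:Z - 1).
    rewrite big_ltn // eqxx big_nat_cond big1 ?mp0r // => m /andP[/andP[h2 _] _].
    by case: eqP h2 => // ->.
  have h2 : \big[@mp_plus R/eps R]_(1 <= m < M.+1)
                  (if r i == m then d (prev_node i) (k%:Z - m%:Z) else eps R) =
            if r i == 0%N then eps R else d (prev_node i) (k%:Z - (r i)%:Z).
    case: eqP => [h0|h0].
      rewrite big_nat_cond big1 // => m /andP[/andP[h3 _] _].
      by rewrite h0; case: eqP h3 => // <-.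
    rewrite (bigD1_seq (r i)) /=; last exact: iota_uniq.
      rewrite eqxx big1 ?mp0r // => m hm; by rewrite eq_sym (negPf hm).
    rewrite mem_index_iota ltnS hM andbT lt0n; exact/eqP.
  rewrite hA hb h1 h2 (hrec i k hk); case: eqP => h0.
    by rewrite h0 subr0 mp0r.
  by rewrite mt0r mp0l mtDr mpC.
have key := star_solve hD (A_nil tau k hp).
move=> i; rewrite (key i) /b mulv_big; apply: eq_bigr => m _.
by rewrite /Tmx mulvA.
Qed.
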